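(* For every finite $d\in\mathbb N$, the infimum of $\int_{\mathcal Q} v(q)\,dq$ over all $v\in\mathbb R[q]_d$ satisfying $v(q)-x\ge0$ for all $(q,x,y)\in\mathcal Z$ is attained.
   Context: Let $n\ge1$, $\mathcal Q=[-1,1]^n$, $dq$ Lebesgue measure, and $\mathbb R[q]_d$ the real polynomials in $q=(q_1,\dots,q_n)$ of degree at most $d$. Let $m\ge1$ and $p(q,s)=\sum_{k=0}^m p_k(q)s^k$ with $p_k\in\mathbb R[q]$, $p_m\equiv1$, $s\in\mathbb C$. Writing $s=x+iy$, define $p_\Re,p_\Im\in\mathbb R[q,x,y]$ by $p(q,x+iy)=p_\Re(q,x,y)+i\,p_\Im(q,x,y)$, and $\mathcal Z=\{(q,x,y): q\in\mathcal Q,\ p_\Re(q,x,y)=p_\Im(q,x,y)=0\}$. *)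

(* Defs.v *)
From Stdlib Require Import Reals List.
Open Scope R_scope.

(* Points q of R^n are lists of reals of length n. *)
Definition in_cube (n : nat) (q : list R) : Prop :=
  length q = n /\ Forall (fun t => -1 <= t <= 1) q.

Fixpoint mono_eval (q : list R) (a : list nat) : R :=
  match q, a with
  | t :: q', e :: a' => t ^ e * mono_eval q' a'
  | _, _ => 1
  end.

Definition list_sumn (a : list nat) : nat := fold_right Nat.add 0%nat a.

(* Evaluation of a polynomial given as a list of (coefficient, exponent) pairs. *)
Definition poly_eval (P : list (R * list nat)) (q : list R) : R :=
  fold_right (fun c acc => fst c * mono_eval q (snd c) + acc) 0 P.

Definition is_poly_deg (n d : nat) (f : list R -> R) : Prop :=
  exists P : list (R * list nat),
    Forall (fun c => length (snd c) = n /\ (list_sumn (snd c) <= d)%nat) P /\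
    forall q, length q = n -> f q = poly_eval P q.

Definition is_poly (n : nat) (f : list R -> R) : Prop :=
  exists d, is_poly_deg n d f.

(* Complex arithmetic on pairs (re, im). *)
Definition cmul (z w : R * R) : R * R :=
  (fst z * fst w - snd z * snd w, fst z * snd w + snd z * fst w).

Fixpoint cpow (z : R * R) (k : nat) : R * R :=
  match k with
  | O => (1, 0)
  | S k' => cmul z (cpow z k')
  end.

(* p(q, x+iy) = sum_{k=0}^m p_k(q) (x+iy)^k, as a pair (p_Re, p_Im). *)
Fixpoint psum (pk : nat -> list R -> R) (q : list R) (z : R * R) (k : nat) : R * R :=
  match k with
  | O => (pk O q * fst (cpow z O), pk O q * snd (cpow z O))
  | S k' => (fst (psum pk q z k') + pk k q * fst (cpow z k),
             snd (psum pk q z k') + pk k q * snd (cpow z k))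
  end.

Definition p_Re (m : nat) (pk : nat -> list R -> R) (q : list R) (x y : R) : R :=
  fst (psum pk q (x, y) m).
Definition p_Im (m : nat) (pk : nat -> list R -> R) (q : list R) (x y : R) : R :=
  snd (psum pk q (x, y) m).

Definition inZ (n m : nat) (pk : nat -> list R -> R) (q : list R) (x y : R) : Prop :=
  in_cube n q /\ p_Re m pk q x y = 0 /\ p_Im m pk q x y = 0.

Definition feasible (n m : nat) (pk : nat -> list R -> R) (d : nat) (v : list R -> R) : Prop :=
  is_poly_deg n d v /\
  forall q x y, inZ n m pk q x y -> v q - x >= 0.

(* BoxInt n f I : I is the integral of f over [-1,1]^n, computed as the
   iterated Riemann integral over the coordinates (Fubini). *)
Fixpoint BoxInt (n : nat) (f : list R -> R) (I : R) : Prop :=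
  match n with
  | O => I = f nil
  | S n' => exists g : R -> R,
      (forall t, BoxInt n' (fun l => f (t :: l)) (g t)) /\
      exists pr : Riemann_integrable g (-1) 1, RiemannInt pr = I
  end.

(* Main.v *)
Require Import Defs.
From Stdlib Require Import Reals List Lra Lia Psatz FunctionalExtensionality ClassicalEpsilon.
Open Scope R_scope.

Lemma BoxInt_ext n f g I : (forall q, f q = g q) -> BoxInt n f I -> BoxInt n g I.
Proof. intros H; replace g with f; auto. apply functional_extensionality; auto. Qed.

Lemma BoxInt_unique n : forall f g I J, (forall q, length q = n -> f q = g q) ->
  BoxInt n f I -> BoxInt n g J -> I = J.
Proof.
induction n; simpl; intros f g I J H H1 H2.
- subst. apply H. reflexivity.
- destruct H1 as [g1 [Hg1 [pr1 E1]]]. destruct H2 as [g2 [Hg2 [pr2 E2]]].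
  assert (g1 = g2).
  { apply functional_extensionality; intro t.
    apply (IHn (fun l => f (t :: l)) (fun l => g (t :: l))); auto.
    intros q Hq; apply H; simpl; auto. }
  subst g2. subst. apply RiemannInt_P5.
Qed.

Lemma cont_pow_scal (e : nat) (c : R) : forall x, continuity_pt (fun t => t ^ e * c) x.
Proof.
intro x. apply continuity_pt_mult.
- apply derivable_continuous_pt. apply derivable_pt_pow.
- apply continuity_pt_const. intros u v; reflexivity.
Qed.

Lemma BoxInt_const n c : BoxInt n (fun _ => c) (c * 2 ^ n).
Proof.
revert c; induction n; intro c; simpl.
- ring.
- exists (fun _ => c * 2 ^ n). split. intro t. apply (IHn c).
  exists (RiemannInt_P14 (-1) 1 (c * 2 ^ n)). etransitivity; [apply RiemannInt_P15|]. ring.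
Qed.

Lemma BoxInt_lin n : forall f g I J l, BoxInt n f I -> BoxInt n g J ->
  BoxInt n (fun q => f q + l * g q) (I + l * J).
Proof.
induction n; simpl; intros f g I J l H1 H2.
- subst; reflexivity.
- destruct H1 as [g1 [Hg1 [pr1 E1]]]. destruct H2 as [g2 [Hg2 [pr2 E2]]].
  exists (fun t => g1 t + l * g2 t). split.
  + intro t. apply IHn; auto.
  + exists (RiemannInt_P10 l pr1 pr2). rewrite (RiemannInt_P13 pr1 pr2). subst; reflexivity.
Qed.

Lemma BoxInt_scal n : forall f I l, BoxInt n f I -> BoxInt n (fun q => l * f q) (l * I).
Proof.
intros f I l H.
pose proof (BoxInt_lin n (fun _ => 0) f (0 * 2 ^ n) I l (BoxInt_const n 0) H) as H'.
replace (l * I) with (0 * 2 ^ n + l * I) by ring.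
eapply BoxInt_ext; [|exact H']. intro q; simpl; ring.
Qed.

Lemma mono_nil q : mono_eval q nil = 1.
Proof. destruct q; reflexivity. Qed.

Lemma mono_int_ex n : forall a, exists I, BoxInt n (fun q => mono_eval q a) I.
Proof.
induction n; intro a.
- exists (mono_eval nil a). reflexivity.
- destruct a as [|e a'].
  + exists (1 * 2 ^ S n). eapply BoxInt_ext; [|apply BoxInt_const].
    intro q; rewrite mono_nil; reflexivity.
  + destruct (IHn a') as [mu Hmu].
    assert (pr : Riemann_integrable (fun t => t ^ e * mu) (-1) 1).
    { apply continuity_implies_RiemannInt. lra. intros; apply cont_pow_scal. }
    exists (RiemannInt pr). simpl. exists (fun t => t ^ e * mu). split.
    * intro t. apply (BoxInt_scal n _ _ (t ^ e) Hmu).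
    * exists pr; reflexivity.
Qed.

Definition mu n a : R := proj1_sig (constructive_indefinite_description _ (mono_int_ex n a)).
Lemma mu_spec n a : BoxInt n (fun q => mono_eval q a) (mu n a).
Proof. unfold mu. destruct (constructive_indefinite_description _ _); auto. Qed.

Definition Lint n (P : list (R * list nat)) : R :=
  fold_right (fun c acc => fst c * mu n (snd c) + acc) 0 P.

Lemma BoxInt_poly n P : BoxInt n (poly_eval P) (Lint n P).
Proof.
induction P as [|c P IH]; simpl.
- replace 0 with (0 * 2 ^ n) by ring. eapply BoxInt_ext; [|apply BoxInt_const].
  intro q; reflexivity.
- pose proof (BoxInt_lin n _ _ _ _ (fst c) IH (mu_spec n (snd c))) as H.
  replace (fst c * mu n (snd c) + Lint n P) with (Lint n P + fst c * mu n (snd c)) by ring.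
  eapply BoxInt_ext; [|exact H]. intro q; unfold poly_eval; simpl; ring.
Qed.

Lemma BoxInt_nonneg n : forall f I, BoxInt n f I ->
  (forall q, in_cube n q -> 0 <= f q) -> 0 <= I.
Proof.
induction n; simpl; intros f I H Hf.
- subst. apply Hf. split; auto.
- destruct H as [g [Hg [pr E]]]. subst I.
  assert (Hg0 : forall t, -1 <= t <= 1 -> 0 <= g t).
  { intros t Ht. apply (IHn (fun l => f (t :: l))); auto.
    intros q [Hl Hq]. apply Hf. split; simpl; auto. }
  replace 0 with (0 * (1 - -1)) by ring.
  rewrite <- (RiemannInt_P15 (RiemannInt_P14 (-1) 1 0)).
  apply RiemannInt_P19. lra. intros x Hx. unfold fct_cte. apply Hg0; lra.
Qed.

Lemma RI_lb g x y c (pr : Riemann_integrable g x y) : x <= y ->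
  (forall t, x < t < y -> c <= g t) -> c * (y - x) <= RiemannInt pr.
Proof.
intros Hxy H. rewrite <- (RiemannInt_P15 (RiemannInt_P14 x y c)).
apply RiemannInt_P19; auto.
Qed.

Definition prodlen (B : list (R * R)) : R :=
  fold_right (fun ab acc => (snd ab - fst ab) * acc) 1 B.

Lemma prodlen_pos B : Forall (fun ab => -1 <= fst ab /\ fst ab < snd ab /\ snd ab <= 1) B -> 0 < prodlen B.
Proof.
induction B as [|ab B IH]; simpl; intros H. lra.
inversion H; subst. apply Rmult_lt_0_compat; [lra| auto].
Qed.

Lemma BoxInt_box n : forall f I (B : list (R * R)) eps, length B = n ->
  Forall (fun ab => -1 <= fst ab /\ fst ab < snd ab /\ snd ab <= 1) B -> 0 <= eps -> BoxInt n f I ->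
  (forall q, in_cube n q -> 0 <= f q) ->
  (forall q, in_cube n q -> Forall2 (fun ab t => fst ab <= t <= snd ab) B q -> eps <= f q) ->
  eps * prodlen B <= I.
Proof.
induction n; simpl; intros f I B eps HB HBf Heps H Hf Hbox.
- destruct B; [|discriminate]. simpl. subst. rewrite Rmult_1_r.
  apply Hbox. split; auto. constructor.
- destruct B as [|[a0 b0] B']; [discriminate|]. simpl in *. injection HB as HB.
  inversion HBf as [|? ? Hab HB']; subst; simpl in Hab.
  destruct H as [g [Hg [pr E]]]. subst I.
  assert (Hg0 : forall t, -1 <= t <= 1 -> 0 <= g t).
  { intros t Ht. apply (BoxInt_nonneg (length B') (fun l => f (t :: l))); auto.
    intros q [Hl Hq]. apply Hf. split; simpl; auto. }
  assert (Hg1 : forall t, a0 <= t <= b0 -> eps * prodlen B' <= g t).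
  { intros t Ht. apply (IHn (fun l => f (t :: l))); auto.
    - intros q [Hl Hq]. apply Hf. split; simpl; auto. constructor; auto; lra.
    - intros q [Hl Hq] H2. apply Hbox. split; simpl; auto. constructor; auto; lra.
      constructor; auto. }
  pose (pra := RiemannInt_P22 pr (conj (proj1 Hab) (Rlt_le _ _ (Rlt_le_trans _ _ _ (proj1 (proj2 Hab)) (proj2 (proj2 Hab)))))).
  assert (Ha01 : a0 <= a0 <= 1) by lra.
  pose (prr := RiemannInt_P23 pr (conj (proj1 Hab) (proj2 Ha01))).
  assert (Hb01 : a0 <= b0 <= 1) by lra.
  pose (prb := RiemannInt_P22 prr Hb01).
  pose (prc := RiemannInt_P23 prr Hb01).
  rewrite <- (RiemannInt_P26 pra prr pr).
  rewrite <- (RiemannInt_P26 prb prc prr).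
  assert (0 <= RiemannInt pra).
  { replace 0 with (0 * (a0 - -1)) by ring. apply RI_lb. lra. intros; apply Hg0; lra. }
  assert (0 <= RiemannInt prc).
  { replace 0 with (0 * (1 - b0)) by ring. apply RI_lb. lra. intros; apply Hg0; lra. }
  assert (eps * prodlen B' * (b0 - a0) <= RiemannInt prb).
  { apply RI_lb. lra. intros; apply Hg1; lra. }
  nra.
Qed.

Lemma pow_abs_le1 t e : Rabs t <= 1 -> Rabs (t ^ e) <= 1.
Proof.
intros H; induction e; simpl. rewrite Rabs_R1; lra.
rewrite Rabs_mult. pose proof (Rabs_pos t). pose proof (Rabs_pos (t ^ e)). nra.
Qed.

Lemma pow_lip t s e : Rabs t <= 1 -> Rabs s <= 1 -> Rabs (t ^ e - s ^ e) <= INR e * Rabs (t - s).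
Proof.
intros Ht Hs; induction e.
- simpl. replace (1 - 1) with 0 by ring. rewrite Rabs_R0; lra.
- rewrite S_INR. simpl pow. replace (t * t ^ e - s * s ^ e) with (t * (t ^ e - s ^ e) + (t - s) * s ^ e) by ring.
  eapply Rle_trans; [apply Rabs_triang|]. rewrite !Rabs_mult.
  pose proof (pow_abs_le1 s e Hs). pose proof (Rabs_pos (t ^ e - s ^ e)).
  pose proof (Rabs_pos (t - s)). pose proof (Rabs_pos t). pose proof (Rabs_pos (s ^ e)).
  pose proof (pos_INR e). nra.
Qed.

Definition incube1 (t : R) := -1 <= t <= 1.

Lemma incube1_abs t : -1 <= t <= 1 -> Rabs t <= 1.
Proof. intros; apply Rabs_le; lra. Qed.

Lemma mono_abs_le1 q a : Forall (fun t => -1 <= t <= 1) q -> Rabs (mono_eval q a) <= 1.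
Proof.
revert a; induction q as [|t q IH]; intros a H; destruct a as [|e a]; simpl;
  try (rewrite Rabs_R1; lra).
inversion H; subst. rewrite Rabs_mult.
pose proof (pow_abs_le1 t e (incube1_abs _ H2)). pose proof (IH a H3).
pose proof (Rabs_pos (t ^ e)). pose proof (Rabs_pos (mono_eval q a)). nra.
Qed.

Lemma mono_lip del : 0 <= del -> forall a q q0,
  Forall2 (fun t s => -1 <= t <= 1 /\ -1 <= s <= 1 /\ Rabs (t - s) <= del) q q0 ->
  Rabs (mono_eval q a - mono_eval q0 a) <= INR (list_sumn a) * del.
Proof.
intros Hdel a; induction a as [|e a IH]; intros q q0 H.
- rewrite !mono_nil. replace (1 - 1) with 0 by ring. rewrite Rabs_R0. simpl; lra.
- destruct H as [|t s q q0 [Ht [Hs Hts]] H].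
  + simpl. replace (1 - 1) with 0 by ring. rewrite Rabs_R0.
    apply Rmult_le_pos; auto. apply pos_INR.
  + simpl. unfold list_sumn; simpl; fold (list_sumn a). rewrite plus_INR.
    replace (t ^ e * mono_eval q a - s ^ e * mono_eval q0 a) with
      ((t ^ e - s ^ e) * mono_eval q a + s ^ e * (mono_eval q a - mono_eval q0 a)) by ring.
    eapply Rle_trans; [apply Rabs_triang|]. rewrite !Rabs_mult.
    assert (Fq : Forall (fun t => -1 <= t <= 1) q).
    { clear IH. induction H; constructor; tauto. }
    pose proof (mono_abs_le1 q a Fq).
    pose proof (pow_abs_le1 s e (incube1_abs _ Hs)).
    pose proof (pow_lip t s e (incube1_abs _ Ht) (incube1_abs _ Hs)).
    pose proof (IH q q0 H).
    pose proof (Rabs_pos (t ^ e - s ^ e)). pose proof (Rabs_pos (mono_eval q a)).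
    pose proof (Rabs_pos (s ^ e)). pose proof (Rabs_pos (mono_eval q a - mono_eval q0 a)).
    pose proof (pos_INR e). nra.
Qed.

Definition absC (P : list (R * list nat)) : R := fold_right (fun c acc => Rabs (fst c) + acc) 0 P.
Definition lipC (P : list (R * list nat)) : R :=
  fold_right (fun c acc => Rabs (fst c) * INR (list_sumn (snd c)) + acc) 0 P.

Lemma lipC_pos P : 0 <= lipC P.
Proof.
induction P; simpl; [lra|]. pose proof (Rabs_pos (fst a)). pose proof (pos_INR (list_sumn (snd a))). nra.
Qed.

Lemma poly_abs_bound P q : Forall (fun t => -1 <= t <= 1) q -> Rabs (poly_eval P q) <= absC P.
Proof.
intros H; induction P as [|c P IH]; unfold poly_eval in *; simpl. rewrite Rabs_R0; lra.
eapply Rle_trans; [apply Rabs_triang|]. rewrite Rabs_mult.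
pose proof (mono_abs_le1 q (snd c) H). pose proof (Rabs_pos (fst c)). nra.
Qed.

Lemma poly_lip del P q q0 : 0 <= del ->
  Forall2 (fun t s => -1 <= t <= 1 /\ -1 <= s <= 1 /\ Rabs (t - s) <= del) q q0 ->
  Rabs (poly_eval P q - poly_eval P q0) <= lipC P * del.
Proof.
intros Hd H; induction P as [|c P IH]; unfold poly_eval in *; simpl.
- replace (0 - 0) with 0 by ring. rewrite Rabs_R0; lra.
- replace (fst c * mono_eval q (snd c) + fold_right (fun c0 acc => fst c0 * mono_eval q (snd c0) + acc) 0 P -
   (fst c * mono_eval q0 (snd c) + fold_right (fun c0 acc => fst c0 * mono_eval q0 (snd c0) + acc) 0 P))
   with (fst c * (mono_eval q (snd c) - mono_eval q0 (snd c)) +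
   (fold_right (fun c0 acc => fst c0 * mono_eval q (snd c0) + acc) 0 P -
    fold_right (fun c0 acc => fst c0 * mono_eval q0 (snd c0) + acc) 0 P)) by ring.
  eapply Rle_trans; [apply Rabs_triang|]. rewrite Rabs_mult.
  pose proof (mono_lip del Hd (snd c) q q0 H). pose proof (Rabs_pos (fst c)). nra.
Qed.

Definition mkbox (del : R) (q0 : list R) : list (R * R) :=
  map (fun t => (Rmax (-1) (t - del), Rmin 1 (t + del))) q0.

Lemma mkbox_ok del q0 : 0 < del -> Forall (fun t => -1 <= t <= 1) q0 ->
  Forall (fun ab => -1 <= fst ab /\ fst ab < snd ab /\ snd ab <= 1) (mkbox del q0).
Proof.
intros Hd H; induction H; simpl; constructor; auto. simpl.
unfold Rmax, Rmin; destruct (Rle_dec (-1) (x - del)); destruct (Rle_dec 1 (x + del)); lra.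
Qed.

Lemma mkbox_in del q0 : forall q, Forall (fun t => -1 <= t <= 1) q0 -> Forall (fun t => -1 <= t <= 1) q ->
  Forall2 (fun ab t => fst ab <= t <= snd ab) (mkbox del q0) q ->
  Forall2 (fun t s => -1 <= t <= 1 /\ -1 <= s <= 1 /\ Rabs (t - s) <= del) q q0.
Proof.
induction q0 as [|s q0 IH]; intros q H0 H H2; simpl in H2; inversion H2; subst; constructor.
- inversion H0; inversion H; subst. simpl in H4. repeat split; try lra.
  apply Rabs_le. unfold Rmax, Rmin in H4; destruct (Rle_dec (-1) (s - del)); destruct (Rle_dec 1 (s + del)); lra.
- inversion H0; inversion H; subst. apply IH; auto.
Qed.

Lemma Lint_pos n P q0 : in_cube n q0 -> (forall q, in_cube n q -> 0 <= poly_eval P q) ->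
  0 < poly_eval P q0 -> 0 < Lint n P.
Proof.
intros [Hl0 Hq0] Hnn Hv0.
set (v0 := poly_eval P q0) in *.
pose proof (lipC_pos P) as HL.
set (del := Rmin 1 (v0 / (2 * (lipC P + 1)))).
assert (Hdel : 0 < del).
{ unfold del, Rmin; destruct (Rle_dec 1 _). lra. apply Rdiv_lt_0_compat; lra. }
assert (Hdel2 : lipC P * del <= v0 / 2).
{ assert (del <= v0 / (2 * (lipC P + 1))) by apply Rmin_r.
  apply Rle_trans with (lipC P * (v0 / (2 * (lipC P + 1)))). nra.
  unfold Rdiv. rewrite Rinv_mult. 
  assert (0 < / (lipC P + 1)) by (apply Rinv_0_lt_compat; lra).
  assert (lipC P * / (lipC P + 1) <= 1).
  { apply Rmult_le_reg_r with (lipC P + 1). lra. rewrite Rmult_assoc, Rinv_l; lra. }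
  assert (0 < /2) by lra. nra. }
pose proof (BoxInt_box n (poly_eval P) (Lint n P) (mkbox del q0) (v0 / 2)) as HB.
assert (Hp : 0 < prodlen (mkbox del q0)) by (apply prodlen_pos, mkbox_ok; auto).
assert (v0 / 2 * prodlen (mkbox del q0) <= Lint n P).
{ apply HB; auto.
  - unfold mkbox; rewrite length_map; auto.
  - apply mkbox_ok; auto.
  - lra.
  - apply BoxInt_poly.
  - intros q [Hl Hq] Hin.
    pose proof (poly_lip del P q q0 (Rlt_le _ _ Hdel) (mkbox_in del q0 q Hq0 Hq Hin)).
    rewrite Rabs_minus_sym in H. pose proof (Rle_abs (poly_eval P q0 - poly_eval P q)). unfold v0 in *. lra. }
assert (0 < v0 / 2 * prodlen (mkbox del q0)) by (apply Rmult_lt_0_compat; lra). lra.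
Qed.

Fixpoint exps (n d : nat) : list (list nat) :=
  match n with
  | O => nil :: nil
  | S n' => flat_map (fun k => map (cons k) (exps n' (d - k))) (seq 0 (S d))
  end.

Lemma exps_sound n : forall d a, In a (exps n d) -> length a = n /\ (list_sumn a <= d)%nat.
Proof.
induction n; intros d a H; cbn [exps] in H.
- destruct H as [H|[]]; subst; simpl; split; auto; lia.
- apply in_flat_map in H. destruct H as [k [Hk H]]. apply in_map_iff in H.
  destruct H as [a' [<- Ha']]. apply in_seq in Hk. apply IHn in Ha'. simpl.
  unfold list_sumn in *; simpl. lia.
Qed.

Lemma exps_complete n : forall d a, length a = n -> (list_sumn a <= d)%nat -> In a (exps n d).
Proof.
induction n; intros d a Hl Hs; cbn [exps].
- destruct a; [left; auto|discriminate].
- destruct a as [|k a']; [discriminate|]. simpl in Hl. injection Hl as Hl.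
  unfold list_sumn in Hs; simpl in Hs; fold (list_sumn a') in Hs.
  apply in_flat_map. exists k. split. apply in_seq; lia.
  apply in_map. apply IHn; auto; lia.
Qed.

Lemma exps_nodup n : forall d, NoDup (exps n d).
Proof.
induction n; intros d; cbn [exps].
- constructor; [intros []|constructor].
- generalize 0%nat as s. induction (S d) as [|K IHK]; intro s; cbn [seq flat_map]. constructor.
  apply NoDup_app.
  + apply NoDup_map_NoDup_ForallPairs; auto. intros x y _ _ H; injection H; auto.
  + apply IHK.
  + intros a Ha Hb. apply in_map_iff in Ha. destruct Ha as [a' [<- _]].
    apply in_flat_map in Hb. destruct Hb as [k [Hk Hb]]. apply in_map_iff in Hb.
    destruct Hb as [a'' [E _]]. injection E; intros; subst. apply in_seq in Hk. lia.
Qed.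

Definition sumL {A : Type} (h : A -> R) (l : list A) : R := fold_right (fun a acc => h a + acc) 0 l.

Lemma sumL_app {A} (h : A -> R) l1 l2 : sumL h (l1 ++ l2) = sumL h l1 + sumL h l2.
Proof. induction l1; simpl; [ring|]. unfold sumL in *; simpl; rewrite IHl1; ring. Qed.

Lemma sumL_map {A B} (h : B -> R) (f : A -> B) l : sumL h (map f l) = sumL (fun a => h (f a)) l.
Proof. induction l; simpl; auto. unfold sumL in *; simpl; rewrite IHl; ring. Qed.

Lemma sumL_flat_map {A B} (h : B -> R) (f : A -> list B) l :
  sumL h (flat_map f l) = sumL (fun a => sumL h (f a)) l.
Proof. induction l; simpl; auto. rewrite sumL_app, IHl. reflexivity. Qed.

Lemma sumL_ext {A} (h g : A -> R) l : (forall a, In a l -> h a = g a) -> sumL h l = sumL g l.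
Proof. induction l; simpl; intros H; auto. unfold sumL in *; simpl; rewrite H, IHl; auto. Qed.

Lemma sumL_scal {A} (h : A -> R) l c : sumL (fun a => c * h a) l = c * sumL h l.
Proof. induction l; unfold sumL in *; simpl. ring. rewrite IHl; ring. Qed.

Lemma sumL_abs {A} (h : A -> R) l : Rabs (sumL h l) <= sumL (fun a => Rabs (h a)) l.
Proof.
induction l; unfold sumL in *; simpl. rewrite Rabs_R0; lra.
eapply Rle_trans; [apply Rabs_triang|]. lra.
Qed.

Lemma sumL_le {A} (h g : A -> R) l : (forall a, In a l -> h a <= g a) -> sumL h l <= sumL g l.
Proof.
induction l; unfold sumL in *; simpl; intros H. lra.
pose proof (H a (or_introl eq_refl)). pose proof (IHl (fun x Hx => H x (or_intror Hx))). lra.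
Qed.

Definition esum (c : list nat -> R) n d q := sumL (fun a => c a * mono_eval q a) (exps n d).
Definition usum (b : nat -> R) K t := sumL (fun k => b k * t ^ k) (seq 0 K).

Lemma esum_S c n d t l :
  esum c (S n) d (t :: l) = usum (fun k => esum (fun a => c (k :: a)) n (d - k) l) (S d) t.
Proof.
unfold esum, usum. cbn [exps]. rewrite sumL_flat_map. apply sumL_ext. intros k _.
rewrite sumL_map. rewrite Rmult_comm, <- sumL_scal. apply sumL_ext. intros a _. simpl. ring.
Qed.

Lemma usum_S b K t : usum b (S K) t = b 0%nat + t * usum (fun k => b (S k)) K t.
Proof.
unfold usum. change (seq 0 (S K)) with (0%nat :: seq 1 K). rewrite <- seq_shift.
change (sumL (fun k => b k * t ^ k) (0%nat :: map S (seq 0 K))) with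
  (b 0%nat * t ^ 0 + sumL (fun k => b k * t ^ k) (map S (seq 0 K))).
rewrite sumL_map, <- sumL_scal. f_equal. simpl; ring. apply sumL_ext. intros; simpl; ring.
Qed.

Lemma usum_bound b K t : 0 <= t <= 1 -> Rabs (usum b K t) <= sumL (fun k => Rabs (b k)) (seq 0 K).
Proof.
intros Ht. eapply Rle_trans; [apply sumL_abs|]. apply sumL_le. intros k _.
rewrite Rabs_mult. assert (Ht' : -1 <= t <= 1) by lra. pose proof (pow_abs_le1 t k (incube1_abs t Ht')).
pose proof (Rabs_pos (b k)). pose proof (Rabs_pos (t ^ k)). nra.
Qed.

Lemma sumL_nonneg {A} (h : A -> R) l : (forall a, 0 <= h a) -> 0 <= sumL h l.
Proof. intros H; induction l; unfold sumL in *; simpl. lra. pose proof (H a); lra. Qed.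

Lemma uzero K : forall b, (forall t, 0 < t <= 1 -> usum b K t = 0) -> forall k, (k < K)%nat -> b k = 0.
Proof.
induction K; intros b H k Hk. lia.
set (C := sumL (fun k => Rabs (b (S k))) (seq 0 K)).
assert (HC : 0 <= C) by (apply sumL_nonneg; intros; apply Rabs_pos).
assert (Hb0 : b 0%nat = 0).
{ destruct (Req_dec (b 0%nat) 0) as [|Hne]; auto. exfalso.
  pose proof (Rabs_pos_lt _ Hne) as Hpos.
  set (t := Rmin 1 (Rabs (b 0%nat) / (2 * (C + 1)))).
  assert (Ht : 0 < t <= 1).
  { unfold t; split. unfold Rmin; destruct (Rle_dec 1 _). lra. apply Rdiv_lt_0_compat; lra. apply Rmin_l. }
  pose proof (H t Ht) as E. rewrite usum_S in E.
  pose proof (usum_bound (fun k => b (S k)) K t (conj (Rlt_le _ _ (proj1 Ht)) (proj2 Ht))) as Hu.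
  cbv beta in Hu. fold C in Hu.
  assert (Rabs (b 0%nat) = t * Rabs (usum (fun k => b (S k)) K t)).
  { replace (b 0%nat) with (- (t * usum (fun k => b (S k)) K t)) by lra.
    rewrite Rabs_Ropp, Rabs_mult, Rabs_right; lra. }
  assert (t <= Rabs (b 0%nat) / (2 * (C + 1))) by apply Rmin_r.
  assert (t * (2 * (C + 1)) <= Rabs (b 0%nat)).
  { apply Rmult_le_reg_r with (/ (2 * (C + 1))). apply Rinv_0_lt_compat; lra.
    rewrite Rmult_assoc, Rinv_r; lra. }
  assert (t * Rabs (usum (fun k => b (S k)) K t) <= t * C) by (apply Rmult_le_compat_l; lra).
  nra. }
destruct k as [|k]; auto.
apply (IHK (fun k => b (S k))); [|lia].
intros t Ht. pose proof (H t Ht) as E. rewrite usum_S, Hb0 in E.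
apply Rmult_eq_reg_l with t; lra.
Qed.

Lemma ezero n : forall d c, (forall q, in_cube n q -> esum c n d q = 0) ->
  forall a, In a (exps n d) -> c a = 0.
Proof.
induction n; intros d c H a Ha.
- cbn [exps] in Ha. destruct Ha as [<-|[]].
  pose proof (H nil (conj eq_refl (Forall_nil _))) as E. unfold esum, sumL in E; simpl in E. lra.
- cbn [exps] in Ha. apply in_flat_map in Ha. destruct Ha as [k [Hk Ha]].
  apply in_map_iff in Ha. destruct Ha as [a' [<- Ha']]. apply in_seq in Hk.
  apply (IHn (d - k)%nat (fun a => c (k :: a))); auto.
  intros l [Hl Hq].
  apply (uzero (S d) (fun k => esum (fun a => c (k :: a)) n (d - k) l)); [|lia].
  intros t Ht. rewrite <- esum_S. apply H. split; simpl; auto. constructor; auto. lra.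
Qed.

From Coquelicot Require Complex.

Definition sc (r : R) (w : R * R) : R * R := (r * fst w, r * snd w).

Lemma Cm_sc r w : Complex.Cmod (sc r w) = Rabs r * Complex.Cmod w.
Proof.
replace (sc r w) with (Complex.Cmult (Complex.RtoC r) w).
rewrite Complex.Cmod_mult, Complex.Cmod_R; reflexivity.
destruct w; unfold sc, Complex.Cmult, Complex.RtoC; simpl; f_equal; ring.
Qed.

Lemma Cm_cpow z k : Complex.Cmod (cpow z k) = Complex.Cmod z ^ k.
Proof.
induction k; simpl. apply Complex.Cmod_1.
change (cmul z (cpow z k)) with (Complex.Cmult z (cpow z k)).
rewrite Complex.Cmod_mult, IHk; reflexivity.
Qed.

Lemma psum_S pk q z k : psum pk q z (S k) = Complex.Cplus (psum pk q z k) (sc (pk (S k) q) (cpow z (S k))).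
Proof. reflexivity. Qed.

Lemma sumL_const {A} (c : R) (l : list A) : sumL (fun _ => c) l = INR (length l) * c.
Proof.
induction l. unfold sumL; simpl; ring.
change (sumL (fun _ => c) (a :: l)) with (c + sumL (fun _ => c) l).
change (length (a :: l)) with (S (length l)). rewrite IHl, S_INR; ring.
Qed.

Lemma Cm_psum pk q z k :
  Complex.Cmod (psum pk q z k) <= sumL (fun j => Rabs (pk j q) * Complex.Cmod z ^ j) (seq 0 (S k)).
Proof.
induction k.
- simpl. change (pk 0%nat q * 1, pk 0%nat q * 0) with (sc (pk 0%nat q) (1, 0)).
  rewrite Cm_sc. change (1,0) with (Complex.RtoC 1). rewrite Complex.Cmod_1.
  unfold sumL; simpl. lra.
- rewrite psum_S, seq_S, sumL_app. eapply Rle_trans; [apply Complex.Cmod_triangle|].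
  rewrite Cm_sc, Cm_cpow. unfold sumL at 2; cbn [fold_right Nat.add]. lra.
Qed.

Lemma root_bound m' pk q M x y : (forall j, (j <= m')%nat -> Rabs (pk j q) <= M) ->
  pk (S m') q = 1 -> fst (psum pk q (x, y) (S m')) = 0 -> snd (psum pk q (x, y) (S m')) = 0 ->
  Rabs x <= 1 + INR (S m') * M.
Proof.
intros HM Hmon H1 H2.
assert (HM0 : 0 <= M) by (pose proof (HM 0%nat (Nat.le_0_l _)); pose proof (Rabs_pos (pk 0%nat q)); lra).
set (r := Complex.Cmod (x, y)).
assert (Hx : Rabs x <= r) by apply (Complex.re_le_Cmod (x, y)).
assert (Hr0 : 0 <= r) by apply Complex.Cmod_ge_0.
destruct (Rle_dec r 1) as [Hr1|Hr1].
{ pose proof (pos_INR (S m')). nra. }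
apply Rnot_le_lt in Hr1.
set (w := psum pk q (x, y) m').
assert (Hw : Complex.Cmod w <= INR (S m') * M * r ^ m').
{ eapply Rle_trans; [apply Cm_psum|]. fold r.
  replace (INR (S m') * M * r ^ m') with (INR (length (seq 0 (S m'))) * (M * r ^ m'))
    by (rewrite length_seq; ring).
  rewrite <- sumL_const. apply sumL_le. intros j Hj. apply in_seq in Hj.
  apply Rmult_le_compat. apply Rabs_pos. apply pow_le; lra. apply HM; lia.
  apply Rle_pow; [lra|lia]. }
assert (E : Complex.Cplus w (sc (pk (S m') q) (cpow (x, y) (S m'))) = (0, 0)).
{ unfold w. rewrite <- psum_S. destruct (psum pk q (x, y) (S m')) as [u v]; simpl in *; subst; reflexivity. }
assert (Es : sc (pk (S m') q) (cpow (x, y) (S m')) = Complex.Copp w).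
{ destruct w as [w1 w2]; destruct (sc (pk (S m') q) (cpow (x, y) (S m'))) as [s1 s2].
  unfold Complex.Cplus in E; simpl in E. injection E; intros. unfold Complex.Copp; simpl; f_equal; lra. }
assert (Hr : r ^ S m' = Complex.Cmod w).
{ rewrite <- Complex.Cmod_opp, <- Es, Cm_sc, Cm_cpow, Hmon, Rabs_R1. fold r; ring. }
assert (Hpow : 0 < r ^ m') by (apply pow_lt; lra).
assert (r <= INR (S m') * M).
{ apply Rmult_le_reg_r with (r ^ m'); auto. simpl in Hr. rewrite S_INR in *. nra. }
lra.
Qed.

Lemma is_poly_bounded n f : is_poly n f -> exists M, forall q, in_cube n q -> Rabs (f q) <= M.
Proof.
intros [d [P [_ Hf]]]. exists (absC P). intros q [Hl Hq]. rewrite Hf; auto. apply poly_abs_bound; auto.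
Qed.

Lemma finite_bound n (F : nat -> list R -> R) m :
  (forall k, (k <= m)%nat -> exists M, forall q, in_cube n q -> Rabs (F k q) <= M) ->
  exists M, forall k q, (k <= m)%nat -> in_cube n q -> Rabs (F k q) <= M.
Proof.
induction m; intros H.
- destruct (H 0%nat (le_n 0)) as [M HM]. exists M. intros k q Hk Hq.
  replace k with 0%nat by lia. auto.
- destruct IHm as [M1 H1]. intros k Hk; apply H; lia.
  destruct (H (S m) (le_n _)) as [M2 H2]. exists (Rmax M1 M2). intros k q Hk Hq.
  destruct (Nat.eq_dec k (S m)). subst. eapply Rle_trans; [apply H2; auto| apply Rmax_r].
  eapply Rle_trans; [apply H1; auto; lia| apply Rmax_l].
Qed.

Lemma roots_bounded n m pk : (1 <= m)%nat -> (forall k, (k <= m)%nat -> is_poly n (pk k)) ->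
  (forall q, length q = n -> pk m q = 1) ->
  exists B, forall q x y, inZ n m pk q x y -> Rabs x <= B.
Proof.
intros Hm Hpk Hmon.
destruct (finite_bound n pk m (fun k Hk => is_poly_bounded n (pk k) (Hpk k Hk))) as [M HM].
destruct m as [|m']; [lia|].
exists (1 + INR (S m') * M). intros q x y [Hq [H1 H2]].
apply (root_bound m' pk q M x y).
- intros j Hj. apply HM; auto.
- apply Hmon. destruct Hq; auto.
- exact H1.
- exact H2.
Qed.

Lemma mono_zero n q : mono_eval q (repeat 0%nat n) = 1.
Proof. revert q; induction n; intros q; destruct q; simpl; auto. rewrite IHn; ring. Qed.

Lemma const_poly n d B : is_poly_deg n d (fun _ => B).
Proof.
exists ((B, repeat 0%nat n) :: nil). split.
- constructor; [|constructor]. simpl. split. apply repeat_length.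
  clear; induction n; unfold list_sumn in *; simpl; lia.
- intros q _. unfold poly_eval; simpl. rewrite mono_zero; ring.
Qed.

From Stdlib Require Import Reals List.
From HB Require Import structures.
From mathcomp Require Import all_boot all_order all_algebra.
From mathcomp Require Import complex Rstruct.
From mathcomp Require Import ring.
Set Implicit Arguments. Unset Strict Implicit. Unset Printing Implicit Defensive.
Import Order.TTheory GRing.Theory Num.Theory.
Local Open Scope ring_scope.
Local Open Scope complex_scope.

Lemma cmul_RI (z w : R[i]) : cmul (complex.Re z, complex.Im z) (complex.Re w, complex.Im w) =
   (complex.Re (z * w), complex.Im (z * w)).
Proof. by case: z => a b; case: w => c d. Qed.

Lemma cpow_RI (z : R[i]) k : cpow (complex.Re z, complex.Im z) k = (complex.Re (z ^+ k), complex.Im (z ^+ k)).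
Proof.
elim: k => [|k IH]; first by rewrite expr0.
rewrite /=.
by rewrite IH cmul_RI exprS.
Qed.

Lemma Re_scal (r : R) (w : R[i]) : complex.Re (r%:C * w) = r * complex.Re w.
Proof. by case: w => a b /=; ring. Qed.
Lemma Im_scal (r : R) (w : R[i]) : complex.Im (r%:C * w) = r * complex.Im w.
Proof. by case: w => a b /=; ring. Qed.
Lemma Re_add (v w : R[i]) : complex.Re (v + w) = complex.Re v + complex.Re w.
Proof. by case: v; case: w. Qed.
Lemma Im_add (v w : R[i]) : complex.Im (v + w) = complex.Im v + complex.Im w.
Proof. by case: v; case: w. Qed.

Lemma psum_RI pk q (z : R[i]) k :
  psum pk q (complex.Re z, complex.Im z) k =
  (complex.Re (\sum_(j < k.+1) (pk j q)%:C * z ^+ j), complex.Im (\sum_(j < k.+1) (pk j q)%:C * z ^+ j)).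
Proof.
elim: k => [|k IH].
  rewrite big_ord1 /=. congr pair; rewrite ?RplusE ?RmultE ?RminusE ?R0E ?R1E.
  by rewrite mulr0 subr0. by rewrite mul0r addr0.
set zz := (complex.Re z, complex.Im z).
have -> : psum pk q zz k.+1 = (fst (psum pk q zz k) + pk k.+1 q * fst (cpow zz k.+1),
   snd (psum pk q zz k) + pk k.+1 q * snd (cpow zz k.+1))%R by [].
have Hc := cpow_RI z k.+1.
rewrite IH /zz Hc [in RHS]big_ord_recr Re_add Im_add Re_scal Im_scal.
by [].
Qed.

Lemma fta_psum m pk q : (0 < m)%N -> pk m q = 1 ->
  exists x y, fst (psum pk q (x, y) m) = 0 /\ snd (psum pk q (x, y) m) = 0.
Proof.
move=> m0 Hmon.
have [z Hz] := @solve_monicpoly R[i] m (fun i => - (pk i q)%:C) m0.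
exists (complex.Re z), (complex.Im z).
rewrite psum_RI /=.
have -> : \sum_(j < m.+1) (pk j q)%:C * z ^+ j = 0.
  rewrite big_ord_recr /= Hmon Hz.
  rewrite mul1r -big_split /=; apply: big1 => i _; by rewrite mulNr addrN.
by split.
Qed.

Close Scope complex_scope.

From Stdlib Require Import Reals List.
From HB Require Import structures.
From mathcomp Require Import all_boot all_order all_algebra.
From mathcomp Require Import Rstruct Rstruct_topology.
From mathcomp Require Import all_classical all_reals.
From mathcomp Require Import topology normedtype derive.
From mathcomp Require Import ring lra.
Set Implicit Arguments. Unset Strict Implicit. Unset Printing Implicit Defensive.
Import Order.TTheory GRing.Theory Num.Theory.
Import numFieldNormedType.Exports.
Local Open Scope ring_scope.
Local Open Scope classical_set_scope.

Lemma In_memP (T : eqType) (x : T) (l : seq T) : In x l <-> (x \in l).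
Proof.
elim: l => [|a l IH] //=; rewrite in_cons; split.
- by case=> [->|/IH ->]; rewrite ?eqxx ?orbT.
- by case/orP => [/eqP ->|/IH]; [left|right].
Qed.

Lemma NoDup_uniq (T : eqType) (l : seq T) : NoDup l -> uniq l.
Proof.
elim: l => [|a l IH] //= /NoDup_cons_iff [Ha Hl].
by rewrite IH // andbT; apply/negP => /In_memP.
Qed.

Definition NE n d := size (exps n d).
Definition Ex n d i := nth [::] (exps n d) i.

Definition Pc n d (c : 'rV[R]_(NE n d)) : list (R * list nat) :=
  [seq (c ord0 i, Ex n d i) | i <- index_enum 'I_(NE n d)].

Lemma poly_eval_map (I : Type) (f : I -> R * list nat) (s : seq I) q :
  poly_eval [seq f i | i <- s] q = \sum_(i <- s) (f i).1 * mono_eval q (f i).2.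
Proof. elim: s => [|a s IH]; by rewrite ?big_nil ?big_cons //= -IH. Qed.

Lemma Lint_map (I : Type) n (f : I -> R * list nat) (s : seq I) :
  Lint n [seq f i | i <- s] = \sum_(i <- s) (f i).1 * mu n (f i).2.
Proof. elim: s => [|a s IH]; by rewrite ?big_nil ?big_cons //= -IH. Qed.

Definition vc n d (c : 'rV[R]_(NE n d)) (q : list R) : R := poly_eval (Pc c) q.
Definition Lc n d (c : 'rV[R]_(NE n d)) : R := Lint n (Pc c).

Lemma vcE n d c q : @vc n d c q = \sum_(i < NE n d) c ord0 i * mono_eval q (Ex n d i).
Proof. by rewrite /vc /Pc poly_eval_map. Qed.

Lemma LcE n d c : @Lc n d c = \sum_(i < NE n d) c ord0 i * mu n (Ex n d i).
Proof. by rewrite /Lc /Pc Lint_map. Qed.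

Lemma Ex_in n d (i : 'I_(NE n d)) : Ex n d i \in exps n d.
Proof. by rewrite /Ex mem_nth. Qed.

Lemma exps_uniq n d : uniq (exps n d).
Proof. apply: NoDup_uniq; apply: exps_nodup. Qed.

Lemma sum_sel n d (x : 'I_(NE n d) -> R) (j : 'I_(NE n d)) :
  \sum_(i < NE n d) (if Ex n d j == Ex n d i then x i else 0) = x j.
Proof.
rewrite (bigD1 j) //= eqxx big1 ?addr0 // => i /negbTE ij.
case: eqP => // /esym/eqP; rewrite /Ex nth_uniq ?exps_uniq //.
by move/eqP/val_inj => ie; move: ij; rewrite ie eqxx.
Qed.

Lemma vc_poly n d c : is_poly_deg n d (@vc n d c).
Proof.
exists (Pc c); split => //.
apply/Forall_forall => x /In_memP /mapP [i _ ->] /=.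
by apply: exps_sound; apply/In_memP; apply: Ex_in.
Qed.

Lemma sel_exp n d (a : list nat) (g : list nat -> R) : a \in exps n d ->
  \sum_(i < NE n d) (if a == Ex n d i then g (Ex n d i) else 0) = g a.
Proof.
move=> Ha. have Hj : (index a (exps n d) < NE n d)%N by rewrite /NE index_mem.
have Ej : Ex n d (Ordinal Hj) = a by rewrite /Ex nth_index.
have := sum_sel (fun i => g (Ex n d i)) (Ordinal Hj). by rewrite Ej.
Qed.

Lemma sumL_big (A : Type) (h : A -> R) (l : seq A) : sumL h l = \sum_(a <- l) h a.
Proof. elim: l => [|a l IH]; by rewrite ?big_nil ?big_cons //= -IH. Qed.

Lemma vc_repr n d f : is_poly_deg n d f -> exists c, forall q, length q = n -> f q = @vc n d c q.
Proof.
move=> [P [HP Hf]].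
exists (\row_(i < NE n d) \sum_(p <- P) (if p.2 == Ex n d i then p.1 else 0)).
move=> q Hq; rewrite Hf // vcE.
under eq_bigr => i _ do rewrite mxE big_distrl /=.
rewrite exchange_big /=.
have -> : poly_eval P q = poly_eval [seq p | p <- P] q by rewrite map_id.
rewrite poly_eval_map; apply: eq_big_seq => p /In_memP Hp.
have Hin : p.2 \in exps n d.
  by apply/In_memP; move: HP => /Forall_forall /(_ p Hp) [H1 H2]; apply: exps_complete.
rewrite -(sel_exp (fun a => p.1 * mono_eval q a) Hin).
by apply: eq_bigr => i _; case: eqP => _; rewrite ?mul0r.
Qed.

Lemma vc_zero n d (u : 'rV[R]_(NE n d)) : (forall q, in_cube n q -> @vc n d u q = 0) -> u = 0.
Proof.
move=> H.
pose cf a := \sum_(i < NE n d) (if a == Ex n d i then u ord0 i else 0).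
have He : forall q, esum cf n d q = vc u q.
  move=> q; rewrite /esum sumL_big vcE /cf.
  under eq_bigr => a _ do rewrite big_distrl /=.
  rewrite exchange_big /=; apply: eq_bigr => i _.
  rewrite (bigD1_seq (Ex n d i)) /= ?Ex_in ?exps_uniq // eqxx big1 ?addr0 //.
  by move=> a /negbTE ->; rewrite /= Rmult_0_l.
have Z := ezero n d cf (fun q Hq => etrans (He q) (H q Hq)).
apply/rowP => j; rewrite mxE.
have := Z (Ex n d j) (proj2 (In_memP _ _) (Ex_in j)).
by rewrite /cf sum_sel.
Qed.

Lemma cont_sum_gen (K : realType) (N : nat) (a : 'I_N -> K) :
  continuous (fun c : 'rV[K]_N => \sum_(i < N) c ord0 i * a i).
Proof.
have H : forall s : seq 'I_N, continuous (fun c : 'rV[K]_N => \sum_(i <- s) c ord0 i * a i).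
  elim=> [|j s IH].
    have -> : (fun c : 'rV[K]_N => \sum_(i <- [::]) c ord0 i * a i) = (fun _ => 0).
      by apply: funext => c; rewrite big_nil.
    exact: cst_continuous.
  have -> : (fun c : 'rV[K]_N => \sum_(i <- j :: s) c ord0 i * a i) =
     (fun c : 'rV[K]_N => c ord0 j * a j) + (fun c => \sum_(i <- s) c ord0 i * a i).
    by apply: funext => c; rewrite big_cons.
  move=> x; apply: continuousD; last exact: IH.
  have -> : (fun c : 'rV[K]_N => c ord0 j * a j) = (fun c : 'rV[K]_N => c ord0 j) \* (fun _ => a j) by [].
  apply: continuousM; [exact: coord_continuous | exact: cst_continuous].
exact: H.
Qed.

Lemma cont_sum (N : nat) (a : 'I_N -> R) :
  continuous (fun c : 'rV[R]_N => \sum_(i < N) c ord0 i * a i).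
Proof. exact: (@cont_sum_gen R). Qed.

Lemma vc_cont n d q : continuous (fun c : 'rV[R]_(NE n d) => vc c q).
Proof.
have -> : (fun c : 'rV[R]_(NE n d) => vc c q) =
  (fun c => \sum_(i < NE n d) c ord0 i * mono_eval q (Ex n d i)) by apply: funext => c; rewrite vcE.
exact: cont_sum.
Qed.

Lemma Lc_cont n d : continuous (fun c : 'rV[R]_(NE n d) => Lc c).
Proof.
have -> : (fun c : 'rV[R]_(NE n d) => Lc c) =
  (fun c => \sum_(i < NE n d) c ord0 i * mu n (Ex n d i)) by apply: funext => c; rewrite LcE.
exact: cont_sum.
Qed.

Lemma vcD n d (c1 c2 : 'rV[R]_(NE n d)) q : vc (c1 + c2) q = vc c1 q + vc c2 q.
Proof. by rewrite !vcE -big_split; apply: eq_bigr => i _; rewrite mxE mulrDl. Qed.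
Lemma vcZ n d k (c : 'rV[R]_(NE n d)) q : vc (k *: c) q = k * vc c q.
Proof. by rewrite !vcE mulr_sumr; apply: eq_bigr => i _; rewrite mxE mulrA. Qed.
Lemma LcD n d (c1 c2 : 'rV[R]_(NE n d)) : Lc (c1 + c2) = Lc c1 + Lc c2.
Proof. by rewrite !LcE -big_split; apply: eq_bigr => i _; rewrite mxE mulrDl. Qed.
Lemma LcZ n d k (c : 'rV[R]_(NE n d)) : Lc (k *: c) = k * Lc c.
Proof. by rewrite !LcE mulr_sumr; apply: eq_bigr => i _; rewrite mxE mulrA. Qed.
Lemma Lc0 n d : @Lc n d 0 = 0.
Proof. by rewrite LcE big1 // => i _; rewrite mxE mul0r. Qed.

From Stdlib Require Import Classical.

Lemma bounded_by (N : nat) (A : set 'rV[R]_N) (M : R) :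
  (forall x, A x -> `|x| <= M) -> bounded_set A.
Proof.
move=> HM; rewrite /bounded_set /bounded_near.
near=> M'. move=> x Ax /=. apply: le_trans (HM x Ax) _.
near: M'. apply: nbhs_pinfty_ge. exact: num_real.
Unshelve. all: by end_near.
Qed.

Lemma recession n d : exists2 del : R, 0 < del &
  forall w : 'rV[R]_(NE n d), (forall q, in_cube n q -> 0 <= vc w q) -> `|w| * del <= Lc w.
Proof.
pose K := [set u : 'rV[R]_(NE n d) | `|u| = 1 /\ forall q, in_cube n q -> 0 <= vc u q].
have normK : forall w : 'rV[R]_(NE n d), w != 0 -> (forall q, in_cube n q -> 0 <= vc w q) ->
    K (`|w|^-1 *: w).
  move=> w w0 Hw; split.
    by rewrite normrZ normfV normr_id mulVf // normr_eq0.
  move=> q Hq; rewrite vcZ; apply: mulr_ge0; [by rewrite invr_ge0 | exact: Hw].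
have cK : compact K.
  apply: bounded_closed_compact.
    by apply: (@bounded_by _ _ 1) => x [-> _].
  have -> : K = (Num.norm @^-1` [set t : R | t = 1]) `&`
     \bigcap_(q in [set q | in_cube n q]) ((fun c : 'rV[R]_(NE n d) => vc c q) @^-1` [set t : R | 0 <= t]).
    apply/seteqP; split => u /=.
      by move=> [H1 H2]; split => // q Hq; apply: H2.
    by move=> [H1 H2]; split => // q Hq; apply: H2.
  apply: closedI.
    by apply: (proj1 (continuous_closedP _) (@norm_continuous _ _)); apply: closed_eq.
  apply: closed_bigI => q _.
  by apply: (proj1 (continuous_closedP _) (@vc_cont n d q)); apply: closed_ge.
have [[u0 Ku0]|K0] := pselect (K !=set0).
- have [u Ku Hmin] := compact_EVT_min (ex_intro _ u0 Ku0) cK (continuous_subspaceT (@Lc_cont n d)).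
  move: Ku; rewrite inE => -[Hu1 Hu2].
  have u0' : u != 0 by rewrite -normr_eq0 Hu1 oner_eq0.
  have [q0 Hq0] : exists q0, ~ (in_cube n q0 -> vc u q0 = 0).
    apply: not_all_ex_not => H; move/eqP: u0'; apply; exact: vc_zero.
  have [Hq0c Hv0] := imply_to_and _ _ Hq0.
  have pos : 0 < Lc u.
    apply/RltP; apply: (@Lint_pos n (Pc u) q0 Hq0c).
      by move=> q Hq; apply/RleP; apply: Hu2.
    apply/RltP; rewrite lt_neqAle eq_sym; apply/andP; split; first by apply/eqP.
    exact: Hu2.
  exists (Lc u) => // w Hw.
  have [->|w0] := eqVneq w 0; first by rewrite normr0 mul0r Lc0.
  have := Hmin _ (mem_set (normK w w0 Hw)).
  rewrite LcZ => H.
  have nw : 0 < `|w| by rewrite normr_gt0.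
  by rewrite -ler_pdivlMl // mulrC.
- exists 1 => // w Hw.
  have [->|w0] := eqVneq w 0; first by rewrite normr0 mul0r Lc0.
  by exfalso; apply: K0; exists (`|w|^-1 *: w); apply: normK.
Qed.

Lemma closed_feas n m pk d :
  closed [set c : 'rV[R]_(NE n d) | forall q x y, inZ n m pk q x y -> x <= vc c q].
Proof.
have -> : [set c : 'rV[R]_(NE n d) | forall q x y, inZ n m pk q x y -> x <= vc c q] =
  \bigcap_(z in [set z : list R * R * R | inZ n m pk z.1.1 z.1.2 z.2])
     ((fun c : 'rV[R]_(NE n d) => vc c z.1.1) @^-1` [set t : R | z.1.2 <= t]).
  apply/seteqP; split => c /=.
    by move=> H [[q x] y] /= Hz; apply: H Hz.
  by move=> H q x y Hz; apply: (H ((q, x), y)).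
apply: closed_bigI => z _.
by apply: (proj1 (continuous_closedP _) (@vc_cont n d z.1.1)); apply: closed_ge.
Qed.

Close Scope classical_set_scope.
Close Scope ring_scope.
Open Scope R_scope.

Theorem mainTheorem3 (n m : nat) (pk : nat -> list R -> R)
  (Hn : (1 <= n)%coq_nat) (Hm : (1 <= m)%coq_nat)
  (Hpk : forall k, (k <= m)%coq_nat -> is_poly n (pk k))
  (Hmonic : forall q, length q = n -> pk m q = 1)
  (d : nat) :
  exists vstar : list R -> R,
    feasible n m pk d vstar /\
    exists I : R, BoxInt n vstar I /\
      forall (w : list R -> R) (J : R),
        feasible n m pk d w -> BoxInt n w J -> I <= J.
Proof.
Local Open Scope ring_scope.
Local Open Scope classical_set_scope.
have [B HB] := roots_bounded n m pk Hm Hpk Hmonic.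
have Hex : forall q, in_cube n q -> exists x y, inZ n m pk q x y.
  have Hm' : (0 < m)%N by apply/ssrnat.leP.
  move=> q Hq; have [x [y [H1 H2]]] := @fta_psum m pk q Hm' (Hmonic q (proj1 Hq)).
  by exists x, y; split.
have [c0 Hc0] := @vc_repr n d _ (const_poly n d B).
pose Fs := [set c : 'rV[R]_(NE n d) | forall q x y, inZ n m pk q x y -> x <= vc c q].
pose S := Fs `&` [set c | Lc c <= Lc c0].
have c0F : Fs c0.
  move=> q x y Hz; rewrite -Hc0; last by case: Hz => [[]].
  apply/RleP; apply: Rle_trans (Rle_abs x) (HB q x y Hz).
have [del del0 Hdel] := recession n d.
have cS : compact S.
  apply: bounded_closed_compact.
    apply: (@bounded_by _ _ ((2 * Lc c0 / del + `|c0|)%R)) => c [cF cL].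
    have Hw : forall q, in_cube n q -> 0 <= vc (c + c0) q.
      move=> q Hq; have [x [y Hz]] := Hex q Hq.
      rewrite vcD -Hc0; last by case: Hq.
      have hB : `|x| <= B by rewrite -RabsE; apply/RleP; exact: HB q x y Hz.
      move: hB; rewrite ler_norml => /andP [h1 _].
      have h2 := cF q x y Hz. lra.
    have := Hdel _ Hw; rewrite LcD => H.
    have Hn1 : `|c + c0| <= 2 * Lc c0 / del.
      have cL' : Lc c <= Lc c0 := cL. rewrite ler_pdivlMr //. lra.
    have Hc : `|c| <= `|c + c0| + `|c0| by have := ler_normB (c + c0) c0; rewrite addrK.
    lra.
  apply: closedI; first exact: closed_feas.
  have -> : [set c | Lc c <= Lc c0] = (fun c : 'rV[R]_(NE n d) => Lc c) @^-1` [set t : R | t <= Lc c0] by [].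
  by apply: (proj1 (continuous_closedP _) (@Lc_cont n d)); apply: closed_le.
have [cs Scs Hmin] := compact_EVT_min (ex_intro _ c0 (conj c0F (lexx _))) cS
  (continuous_subspaceT (@Lc_cont n d)).
move: Scs; rewrite inE => -[csF csL].
exists (fun q => vc cs q); split.
  split; first exact: vc_poly.
  move=> q x y Hz; apply: Rle_ge; apply/RleP; rewrite RminusE R0E subr_ge0; exact: csF q x y Hz.
exists (Lc cs); split; first exact: BoxInt_poly.
move=> w J [Hwp Hwc] HJ.
have [c Hc] := @vc_repr n d _ Hwp.
have -> : J = Lc c.
  apply: (BoxInt_unique n w (fun q => vc c q)) => //; exact: BoxInt_poly.
have cF : Fs c.
  move=> q x y Hz; rewrite -Hc; last by case: Hz => [[]].
  have := Hwc q x y Hz => /Rge_le /RleP; rewrite subr_ge0 //.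
apply/RleP.
have [cL|cL] := leP (Lc c) (Lc c0).
  by apply: Hmin; rewrite inE; split.
by apply: le_trans csL (ltW cL).
Qed.
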